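(* For $1<\alpha<\infty$, the norm of the Ces\`aro operator on the $\alpha$-Bloch space satisfies $\|\mathcal{C}\|_{\mathcal{B}^\alpha\to\mathcal{B}^\alpha}\ge\frac32$.
   Context: $\mathbb{D}$ is the open unit disc and $H(\mathbb{D})$ the space of analytic functions on $\mathbb{D}$. For $f(z)=\sum_{k\ge0}a_kz^k\in H(\mathbb{D})$ the Ces\`aro operator is $\mathcal{C}(f)(z)=\sum_{n\ge0}\Big(\frac{1}{n+1}\sum_{k=0}^n a_k\Big)z^n=\int_0^1\frac{f(tz)}{1-tz}\,dt$. For $\alpha>0$ the $\alpha$-Bloch space $\mathcal{B}^\alpha$ consists of $f\in H(\mathbb{D})$ with $\sup_{z\in\mathbb{D}}(1-|z|^2)^\alpha|f'(z)|<\infty$, normed by $\|f\|_{\mathcal{B}^\alpha}=|f(0)|+\sup_{z\in\mathbb{D}}(1-|z|^2)^\alpha|f'(z)|$. Operator norms are $\|\mathcal{C}\|_{X\to Y}=\sup\{\|\mathcal{C}f\|_Y:\|f\|_X\le 1\}$. *)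

(* Defs.v *)
From Stdlib Require Import Reals.
From Coquelicot Require Import Coquelicot.
Open Scope R_scope.

Definition in_disc (z : C) : Prop := Cmod z < 1.

Definition analytic_on_disc (f : C -> C) : Prop :=
  forall z : C, in_disc z -> exists l : C,
    @is_derive C_AbsRing C_NormedModule f z l.

Definition bloch_sup (alpha : R) (f : C -> C) : Rbar :=
  Lub_Rbar (fun x : R => exists z l : C, in_disc z /\
     @is_derive C_AbsRing C_NormedModule f z l /\
     x = Rpower (1 - (Cmod z) ^ 2) alpha * Cmod l).

Definition bloch_norm (alpha : R) (f : C -> C) : Rbar :=
  Rbar_plus (Finite (Cmod (f 0%R))) (bloch_sup alpha f).

Definition cesaro (f : C -> C) (z : C) : C :=
  @RInt C_R_CompleteNormedModule
    (fun t : R => Cdiv (f (Cmult (RtoC t) z)) (Cminus (RtoC 1) (Cmult (RtoC t) z)))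
    0 1.

Definition cesaro_opnorm (alpha : R) : Rbar :=
  Rbar_lub (fun x : Rbar => exists f : C -> C, analytic_on_disc f /\
     Rbar_le (bloch_norm alpha f) (Finite 1) /\ x = bloch_norm alpha (cesaro f)).

(* Main.v *)
Require Import Defs.
From Stdlib Require Import Reals Lra.
From Coquelicot Require Import Coquelicot.
Open Scope R_scope.
Notation CRC := C_R_CompleteNormedModule.
Definition F (y : C) (t : R) : C := Cdiv (RtoC 1) (Cminus (RtoC 1) (Cmult (RtoC t) y)).
Lemma normCR (u : C) : @norm _ CRC u = Cmod u.
Proof. destruct u as [a b]. unfold norm; simpl. unfold prod_norm, Cmod; simpl.
 change (norm a) with (Rabs a). change (norm b) with (Rabs b).
 rewrite !Rmult_1_r, <- !Rabs_mult, !Rabs_pos_eq by nra. reflexivity. Qed.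
Lemma minusCR (u v : C) : @minus (CompleteNormedModule.AbelianGroup R_AbsRing CRC) u v = Cminus u v.
Proof. destruct u, v. reflexivity. Qed.
Lemma scalCR (t : R) (u : C) : @scal _ (CompleteNormedModule.ModuleSpace R_AbsRing CRC) t u = Cmult (RtoC t) u.
Proof. destruct u. unfold scal; simpl. unfold prod_scal, Cmult, RtoC; simpl. unfold scal; simpl.
 unfold mult; simpl. f_equal; ring. Qed.
Lemma int_t (y : C) : is_RInt (V:=CRC) (fun t => scal t y) 0 1 (scal (1/2) y).
Proof.
assert (H := is_RInt_scal_derive (V:=CRC) (fun t => t^2/2) (fun _ => y) (fun t => t) (fun _ => zero) 0 1).
assert (h1 : forall t : R, Rmin 0 1 <= t <= Rmax 0 1 -> is_derive (fun t0 : R => t0 ^ 2 / 2) t t).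
{ intros; auto_derive; auto; field. }
specialize (H h1 (fun t _ => is_derive_const _ _) (fun t _ => continuous_id t) (fun t _ => continuous_const _ _)).
cbv beta in H.
replace (scal (1/2) y) with (minus (scal (1 ^ 2 / 2) y) (scal (0 ^ 2 / 2) y)).
- eapply is_RInt_ext; [|exact H]. intros; cbv beta. destruct y as [a b]. unfold plus, scal, zero; simpl. unfold prod_plus, prod_scal, prod_zero; simpl. unfold plus, scal, zero; simpl. unfold mult, plus; simpl. f_equal; ring.
- rewrite !minusCR, !scalCR. destruct y; unfold Cminus, Cmult, Cplus, Copp, RtoC; simpl; f_equal; field.
Qed.
Lemma ex_F y : Cmod y < 1 -> ex_RInt (V:=C_R_CompleteNormedModule) (F y) 0 1.
Proof.
intros Hy.
destruct y as [a b].
assert (Ha : Rabs a < 1). { eapply Rle_lt_trans; [|exact Hy]. apply (re_le_Cmod (a,b)). }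
apply (ex_RInt_fct_extend_pair (U:=R_NormedModule) (V:=R_NormedModule));
 apply (ex_RInt_continuous (V:=R_CompleteNormedModule)); rewrite Rmin_left, Rmax_right by lra; intros t Ht;
 apply (ex_derive_continuous (K:=R_AbsRing) (V:=R_NormedModule)); unfold F, Cdiv, Cminus, Cmult, Cinv, RtoC, Copp, Cplus; simpl;
 auto_derive.
all: assert (Hta : t * a < 1) by (apply Rabs_def2 in Ha; nra);
  split; [|split; [|exact I]]; nra.
Qed.
Lemma ptw (y : C) (t : R) : Cmod y <= 1/2 -> 0 <= t <= 1 ->
  Cmod (Cminus (Cminus (F y t) (RtoC 1)) (Cmult (RtoC t) y)) <= 2 * (Cmod y * Cmod y).
Proof.
intros Hy Ht.
set (w := Cmult (RtoC t) y).
assert (Hw : Cmod w <= Cmod y).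
{ unfold w; rewrite Cmod_mult, Cmod_R, Rabs_pos_eq by lra.
  pose proof (Cmod_ge_0 y). nra. }
assert (H1 : 1/2 <= Cmod (Cminus (RtoC 1) w)).
{ pose proof (Cmod_triangle (Cminus (RtoC 1) w) w).
  replace (Cminus (RtoC 1) w + w)%C with (RtoC 1) in H by (unfold Cminus; ring).
  rewrite Cmod_1 in H. lra. }
assert (Hnz : Cminus (RtoC 1) w <> RtoC 0).
{ intro E. rewrite E, Cmod_0 in H1. lra. }
replace (Cminus (Cminus (F y t) (RtoC 1)) w) with (Cdiv (Cmult w w) (Cminus (RtoC 1) w)).
2:{ unfold F; fold w. field. exact Hnz. }
rewrite Cmod_div by exact Hnz. rewrite Cmod_mult.
pose proof (Cmod_ge_0 w).
apply Rle_trans with (Cmod w * Cmod w / (1/2)).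
- apply Rmult_le_compat_l. nra. apply Rinv_le_contravar; lra.
- unfold Rdiv. nra.
Qed.
Lemma G_bound y : Cmod y <= 1/2 ->
  Cmod (Cminus (Cminus (RInt (V:=CRC) (F y) 0 1) (RtoC 1)) (Cmult y (RtoC (1/2)))) <= 2*(Cmod y*Cmod y).
Proof.
intros Hy.
assert (Hy1 : Cmod y < 1) by lra.
pose proof (RInt_correct (V:=CRC) (F y) 0 1 (ex_F y Hy1)) as I1.
pose proof (is_RInt_const (V:=CRC) 0 1 (RtoC 1)) as I2.
pose proof (int_t y) as I3.
pose proof (is_RInt_minus _ _ _ _ _ _ (is_RInt_minus _ _ _ _ _ _ I1 I2) I3) as I.
assert (B : @norm _ CRC (minus (minus (RInt (V:=CRC) (F y) 0 1) (scal (1 - 0) (RtoC 1))) (scal (1 / 2) y)) <= (1 - 0) * (2*(Cmod y*Cmod y))).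
{ eapply (norm_RInt_le_const (V:=CRC)); [exact Rle_0_1| |exact I]. intros t Ht. cbv beta. rewrite normCR, !minusCR, scalCR. apply ptw; auto. }
 cbv beta in B. rewrite normCR, !minusCR, !scalCR in B. rewrite Rminus_0_r in B.
  replace (Cmult y (RtoC (1/2))) with (Cmult (RtoC (1/2)) y) by (apply Cmult_comm).
  replace (RtoC 1) with (Cmult (RtoC 1) (RtoC 1)) at 1 by ring.
  rewrite Rmult_1_l in B. eapply Rle_trans; [|exact B]. right. reflexivity.
Qed.
Lemma G0 : RInt (V:=CRC) (F (RtoC 0)) 0 1 = RtoC 1.
Proof.
pose proof (G_bound (RtoC 0)) as H. rewrite Cmod_0 in H.
assert (H' : Cmod (Cminus (Cminus (RInt (V:=CRC) (F (RtoC 0)) 0 1) (RtoC 1)) (Cmult (RtoC 0) (RtoC (1 / 2)))) = 0).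
{ apply Rle_antisym. apply Rle_trans with (1 := H (ltac:(lra))). lra. apply Cmod_ge_0. }
apply Cmod_eq_0 in H'.
replace (Cmult (RtoC 0) (RtoC (1/2))) with (RtoC 0) in H' by ring.
revert H'. generalize (RInt (V:=CRC) (F (RtoC 0)) 0 1). intros g H'. change C in g.
assert (E : @eq C g (Cplus (Cminus (Cminus g (RtoC 1)) (RtoC 0)) (RtoC 1))) by ring.
assert (E2 : @eq C (Cplus (RtoC 0) (RtoC 1)) (RtoC 1)) by ring. rewrite E, H'. exact E2.
Qed.
Lemma G_deriv : @is_derive C_AbsRing C_NormedModule (fun y => RInt (V:=CRC) (F y) 0 1) (RtoC 0) (RtoC (1/2)).
Proof.
split. apply is_linear_scal_l.
intros x Hx. apply (is_filter_lim_locally_unique (K:=C_AbsRing) (V:=AbsRing_NormedModule C_AbsRing)) in Hx. subst x.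
intros eps. apply (locally_le_locally_norm (K:=C_AbsRing) (V:=AbsRing_NormedModule C_AbsRing)).
assert (Hd : 0 < Rmin (1/2) (eps/2)) by (apply Rmin_glb_lt; destruct eps; simpl; lra).
exists (mkposreal _ Hd). intros y Hy. unfold ball_norm in Hy. simpl in Hy.
change C in y.
change (Cmod (Cminus y (RtoC 0)) < Rmin (1 / 2) (eps / 2)) in Hy.
change (Cmod (Cminus (Cminus (RInt (V:=CRC) (F y) 0 1) (RInt (V:=CRC) (F (RtoC 0)) 0 1)) (Cmult (Cminus y (RtoC 0)) (RtoC (1/2)))) <= eps * Cmod (Cminus y (RtoC 0))).
rewrite G0.
assert (Ey : Cminus y (RtoC 0) = y) by ring. rewrite Ey in *.
pose proof (Rmin_l (1/2) (eps/2)). pose proof (Rmin_r (1/2) (eps/2)).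
pose proof (G_bound y ltac:(lra)).
pose proof (Cmod_ge_0 y). destruct eps as [e He]; simpl in *.
nra.
Qed.

Theorem theorem6p3 (alpha : R) (Halpha : 1 < alpha) :
  Rbar_le (Finite (3 / 2)) (cesaro_opnorm alpha).
Proof.
unfold cesaro_opnorm.
set (f := fun _ : C => RtoC 1).
assert (Hcf : cesaro f = fun y => RInt (V:=CRC) (F y) 0 1) by reflexivity.
apply Rbar_le_trans with (bloch_norm alpha (cesaro f)).
- unfold bloch_norm. rewrite Hcf, G0, Cmod_1.
  assert (L : Rbar_le (Finite (1/2)) (bloch_sup alpha (fun y => RInt (V:=CRC) (F y) 0 1))).
  { unfold bloch_sup. destruct (Lub_Rbar_correct (fun x : R => exists z l : C, in_disc z /\
     @is_derive C_AbsRing C_NormedModule (fun y => RInt (V:=CRC) (F y) 0 1) z l /\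
     x = Rpower (1 - (Cmod z) ^ 2) alpha * Cmod l)) as [Hub _].
    apply Hub. exists (RtoC 0), (RtoC (1/2)). split; [unfold in_disc; rewrite Cmod_0; lra|].
    split; [exact G_deriv|]. rewrite Cmod_0, Cmod_R.
    replace (1 - 0 ^ 2) with 1 by ring. unfold Rpower. rewrite ln_1, Rmult_0_r, exp_0.
    rewrite Rabs_pos_eq by lra. ring. }
  destruct (bloch_sup alpha (fun y => RInt (V:=CRC) (F y) 0 1)) as [r| |]; simpl in *; lra.
- rewrite <- (Rbar_is_lub_unique (fun x => x = bloch_norm alpha (cesaro f)) (bloch_norm alpha (cesaro f))).
  2:{ split. intros x ->. apply Rbar_le_refl. intros b Hb. apply Hb. reflexivity. }
  apply Rbar_lub_subset. intros x ->. exists f. split; [|split; [|reflexivity]].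
  + intros z _. exists zero. exact (is_derive_const (K:=C_AbsRing) (V:=C_NormedModule) (RtoC 1) z).
  + assert (S0 : bloch_sup alpha f = Finite 0).
    { unfold bloch_sup. apply is_lub_Rbar_unique. split.
      - intros x [z [l [Hz [Hd Hx]]]].
        pose proof (is_C_derive_unique _ _ _ Hd) as E1.
        pose proof (is_C_derive_unique _ _ _ (is_derive_const (K:=C_AbsRing) (V:=C_NormedModule) (RtoC 1) z)) as E2.
        assert (El : l = zero) by (rewrite <- E1; exact E2). subst l x. simpl.
        rewrite El. change (Cmod zero) with (Cmod 0). rewrite Cmod_0, Rmult_0_r. lra.
      - intros b Hb. apply Hb. exists (RtoC 0), zero. split; [unfold in_disc; rewrite Cmod_0; lra|].
        split; [exact (is_derive_const (K:=C_AbsRing) (V:=C_NormedModule) (RtoC 1) (RtoC 0))|].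
        change (Cmod zero) with (Cmod 0). rewrite Cmod_0, Rmult_0_r. reflexivity. }
    unfold bloch_norm. rewrite S0. unfold f. rewrite Cmod_1. simpl. lra.
Qed.
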